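(* Let $G$, $A$, $H$, $\beta$, $G_\beta$, $(K,v)$, $\sigma$, $\delta$ be as in the context. Then the map $val:K(t^H,\beta)_\delta\to G_\beta\cup\{\infty\}$ given by $val\left(\sum_{h\in S}a_ht^h\right)=(v(a_{h_0}),h_0)$, where $h_0$ is the least element of the support $S$ (with $a_{h_0}\neq 0$), and $val(0)=\infty$ (a symbol greater than every element of $G_\beta$), is a valuation on the field $K(t^H,\beta)_\delta$.
   Context: $G$ is an ordered abelian group with smallest nonzero convex subgroup $A$, $H=G/A$ with the induced order, $\rho:G\to H$ the projection; $\alpha:H\to G$ is a transversal map ($\rho\alpha=\mathrm{id}_H$, $\alpha(0)=0$) and $\beta(h,h')=\alpha(h+h')-\alpha(h)-\alpha(h')\in A$. $G_\beta$ is $A\times H$ with $(z,h)+(z',h')=(z+z'-\beta(h,h'),h+h')$ and lexicographic order ($(z,h)\le(z',h')$ iff $h<h'$, or $h=h'$ and $z\le z'$); it is an ordered abelian group. $(K,v)$ is a valued field of characteristic $0$, residue characteristic $p$, value group $A$, with cross-section $\sigma:A\to K^\times$ (homomorphism, $v(\sigma(a))=a$). $\delta$ is an infinite cardinal and $K(t^H,\beta)_\delta$ is the field of formal sums $\sum_{h\in S}a_ht^h$, $S\subseteq H$ well ordered, $|S|\le\delta$, $a_h\in K$, with coefficientwise addition and multiplication $\left(\sum a_ht^h\right)\left(\sum b_ht^h\right)=\sum_l\left(\sum_{h+h'=l}a_hb_{h'}\sigma(-\beta(h,h'))\right)t^l$. *)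

(* Defs.v *)
From HB Require Import structures.
From mathcomp Require Import all_boot all_order all_algebra.
From mathcomp Require Import boolp classical_sets fsbigop.
From Stdlib Require Import ClassicalEpsilon.

Set Implicit Arguments.
Unset Strict Implicit.
Unset Printing Implicit Defensive.
Import Order.TTheory GRing.Theory Num.Theory.
Local Open Scope ring_scope.

Definition ordered_abelian_group (G : zmodType) (le : rel G) : Prop :=
  [/\ reflexive le, antisymmetric le, transitive le, total le &
      forall x y z : G, le x y -> le (x + z) (y + z)].

Definition is_subgroup (G : zmodType) (B : pred G) : Prop :=
  B 0 /\ forall x y, B x -> B y -> B (x - y).

Definition is_convex (G : zmodType) (le : rel G) (B : pred G) : Prop :=
  forall x y z, B x -> B z -> le x y -> le y z -> B y.

Definition nonzero_convex_subgroup (G : zmodType) (le : rel G) (B : pred G) :=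
  [/\ is_subgroup B, is_convex le B & exists x, B x /\ x <> 0].

Definition smallest_nonzero_convex_subgroup (G : zmodType) (le : rel G)
  (A : pred G) : Prop :=
  nonzero_convex_subgroup le A /\
  forall B : pred G, nonzero_convex_subgroup le B -> forall x, A x -> B x.

(* rho : G -> H is the projection onto the quotient H = G/A (H is given up to
   isomorphism: a surjective group morphism with kernel exactly A). *)
Definition quotient_proj (G H : zmodType) (A : pred G) (rho : G -> H) :=
  [/\ forall x y, rho (x - y) = rho x - rho y,
      forall h, exists g, rho g = h &
      forall g, rho g = 0 <-> A g].

Definition induced_le (G H : zmodType) (leG : rel G) (rho : G -> H)
  (h h' : H) : Prop :=
  exists g g', [/\ rho g = h, rho g' = h' & leG g g'].

Definition transversal_map (G H : zmodType) (rho : G -> H) (alpha : H -> G) :=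
  (forall h, rho (alpha h) = h) /\ alpha 0 = 0.

Definition cocycle (G H : zmodType) (alpha : H -> G) (h h' : H) : G :=
  alpha (h + h') - alpha h - alpha h'.

Definition Gbeta_add (G H : zmodType) (beta : H -> H -> G)
  (x y : G * H) : G * H :=
  (x.1 + y.1 - beta x.2 y.2, x.2 + y.2).

Definition Gbeta_le (G H : zmodType) (leG : rel G) (leH : H -> H -> Prop)
  (x y : G * H) : Prop :=
  (leH x.2 y.2 /\ x.2 <> y.2) \/ (x.2 = y.2 /\ leG x.1 y.1).

Definition oadd (T : Type) (add : T -> T -> T) (a b : option T) : option T :=
  match a, b with Some x, Some y => Some (add x y) | _, _ => None end.

(* None plays the role of oo, greater than everything *)
Definition ole (T : Type) (le : T -> T -> Prop) (a b : option T) : Prop :=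
  match a, b with
  | _, None => True
  | None, Some _ => False
  | Some x, Some y => le x y
  end.

Definition valuation_on (T Gamma : Type) (S : T -> Prop) (zero : T)
  (add mul : T -> T -> T) (addG : Gamma -> Gamma -> Gamma)
  (leG : Gamma -> Gamma -> Prop) (w : T -> option Gamma) : Prop :=
  [/\ forall x, S x -> (w x = None <-> x = zero),
      forall x y, S x -> S y -> w (mul x y) = oadd addG (w x) (w y) &
      forall x y, S x -> S y ->
        ole leG (w x) (w (add x y)) \/ ole leG (w y) (w (add x y))].

Definition valued_field_with_value_group (G : zmodType) (leG : rel G)
  (A : pred G) (K : fieldType) (v : K -> option G) : Prop :=
  [/\ valuation_on (fun _ : K => True) 0 +%R *%R +%R (fun x y => leG x y) v,
      forall x : K, x <> 0 -> exists2 a, A a & v x = Some a &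
      forall a, A a -> exists x : K, v x = Some a].

Definition char0 (K : fieldType) : Prop :=
  forall n : nat, (n%:R == 0 :> K) = (n == 0)%N.

(* residue field has characteristic p: n.1 lies in the maximal ideal
   (v(n.1) > 0, including oo) iff p divides n *)
Definition residue_char (G : zmodType) (leG : rel G) (K : fieldType)
  (v : K -> option G) (p : nat) : Prop :=
  forall n : nat, (p %| n)%N <->
    match v (n%:R) with None => True | Some z => leG 0 z /\ z <> 0 end.

Definition cross_section (G : zmodType) (A : pred G) (K : fieldType)
  (v : K -> option G) (sigma : G -> K) : Prop :=
  (forall a b, A a -> A b -> sigma (a + b) = sigma a * sigma b) /\
  (forall a, A a -> v (sigma a) = Some a).

(* the cardinal delta is represented by a type D; it is infinite *)
Definition infinite_type (D : Type) : Prop :=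
  exists f : nat -> D, injective f.

Definition support (H : Type) (K : fieldType) (f : H -> K) : H -> Prop :=
  fun h => f h <> 0.

Definition well_ordered_subset (H : Type) (leH : H -> H -> Prop)
  (S : H -> Prop) : Prop :=
  forall P : H -> Prop, (exists h, P h) -> (forall h, P h -> S h) ->
    exists m, P m /\ forall h, P h -> leH m h.

Definition card_le (H : Type) (S : H -> Prop) (D : Type) : Prop :=
  exists f : {h : H | S h} -> D, injective f.

(* f = sum_h f(h) t^h is an element of K(t^H, beta)_delta *)
Definition in_hahn (H : Type) (K : fieldType) (leH : H -> H -> Prop)
  (D : Type) (f : H -> K) : Prop :=
  well_ordered_subset leH (support f) /\ card_le (support f) D.

Definition hahn_zero (H : Type) (K : fieldType) : H -> K := fun _ => 0.

Definition hahn_add (H : Type) (K : fieldType) (f g : H -> K) : H -> K :=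
  fun h => f h + g h.

Definition hahn_mul (G H : zmodType) (K : fieldType) (beta : H -> H -> G)
  (sigma : G -> K) (f g : H -> K) : H -> K :=
  fun l => (\sum_(h \in [set: H]) f h * g (l - h) * sigma (- beta h (l - h)))%R.

(* the least element of the support (arbitrary if f = 0) *)
Definition lead_exp (H : zmodType) (K : fieldType) (leH : H -> H -> Prop)
  (f : H -> K) : H :=
  epsilon (inhabits 0) (fun h0 => f h0 <> 0 /\ forall h, f h <> 0 -> leH h0 h).

Definition hahn_val (G H : zmodType) (K : fieldType) (leH : H -> H -> Prop)
  (v : K -> option G) (f : H -> K) : option (G * H) :=
  let h0 := lead_exp leH f in
  omap (fun z => (z, h0)) (v (f h0)).

(* Main.v *)
Require Import Defs.
From HB Require Import structures.
From mathcomp Require Import all_boot all_order all_algebra.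
From mathcomp Require Import boolp classical_sets fsbigop.
From Stdlib Require Import ClassicalEpsilon.
Set Implicit Arguments.
Unset Strict Implicit.
Unset Printing Implicit Defensive.
Import Order.TTheory GRing.Theory Num.Theory.
Local Open Scope ring_scope.

Definition oH (H : zmodType) (le : H -> H -> Prop) :=
  [/\ (forall a, le a a), (forall a b, le a b -> le b a -> a = b),
      (forall a b c, le a b -> le b c -> le a c), (forall a b, le a b \/ le b a)
    & (forall a b c, le a b -> le (a + c) (b + c))].

Lemma rhoD (G H : zmodType) (A : pred G) (rho : G -> H) :
  quotient_proj A rho -> forall x y, rho (x + y) = rho x + rho y.
Proof.
case=> hB _ _.
have h0 : rho 0 = 0 by rewrite -(subrr 0) hB subrr.
have hN : forall y, rho (- y) = - rho y.
  by move=> y; rewrite -sub0r hB h0 sub0r.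
by move=> x y; have := hB x (- y); rewrite opprK hN opprK.
Qed.

Lemma induced_ok (G : zmodType) (leG : rel G) (A : pred G)
  (H : zmodType) (rho : G -> H) :
  ordered_abelian_group leG -> nonzero_convex_subgroup leG A ->
  quotient_proj A rho -> oH (induced_le leG rho).
Proof.
move=> [refl anti tr tot tradd] [[A0 AB] Acv _] q.
have rD := rhoD q.
have [rB rS rK] := q.
have antiH : forall a b, induced_le leG rho a b -> induced_le leG rho b a -> a = b.
  move=> a b [g1 [g1' [e1 e1' l1]]] [g2 [g2' [e2 e2' l2]]].
  have p1 : leG 0 (g1' - g1) by have := tradd _ _ (- g1) l1; rewrite subrr.
  have p2 : leG 0 (g2' - g2) by have := tradd _ _ (- g2) l2; rewrite subrr.
  have p3 : leG (g1' - g1) ((g1' - g1) + (g2' - g2)).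
    by have := tradd _ _ (g1' - g1) p2; rewrite add0r [X in leG _ X]addrC.
  have As : A ((g1' - g1) + (g2' - g2)).
    apply/rK; rewrite rD !rB e1 e1' e2 e2'.
    by rewrite addrA subrK subrr.
  have Ax := Acv _ _ _ A0 As p1 p3.
  move/rK: Ax; rewrite rB e1 e1' => /eqP; rewrite subr_eq0 => /eqP ->.
  done.
have strict : forall a b, induced_le leG rho a b -> a <> b ->
    forall x y, rho x = a -> rho y = b -> leG x y.
  move=> a b lab nab x y ex ey; case/orP: (tot x y) => // lyx.
  by exfalso; apply: nab; apply: (antiH _ _ lab); exists y, x.
split.
- by move=> a; have [g eg] := rS a; exists g, g; split.
- exact: antiH.
- move=> a b c lab lbc.
  have [eab|nab] := eqVneq a b; first by rewrite eab.
  have [ebc|nbc] := eqVneq b c; first by rewrite -ebc.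
  have [x ex] := rS a; have [y ey] := rS b; have [z ez] := rS c.
  exists x, z; split => //.
  apply: (tr y).
  + by apply: (strict a b) => //; apply/eqP.
  + by apply: (strict b c) => //; apply/eqP.
- move=> a b; have [x ex] := rS a; have [y ey] := rS b.
  by case/orP: (tot x y) => l; [left; exists x, y | right; exists y, x].
- move=> a b c [g [g' [e e' l]]]; have [z ez] := rS c.
  by exists (g + z), (g' + z); rewrite !rD e e' ez; split => //; apply: tradd.
Qed.

Lemma lead_eq (H : zmodType) (K : fieldType) (le : H -> H -> Prop) (f : H -> K) h0 :
  oH le -> f h0 <> 0 -> (forall h, f h <> 0 -> le h0 h) -> lead_exp le f = h0.
Proof.
move=> [_ anti _ _ _] nz mn.
have [nz' mn'] := @epsilon_spec H (inhabits 0)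
  (fun h1 => f h1 <> 0 /\ forall h, f h <> 0 -> le h1 h) (ex_intro _ h0 (conj nz mn)).
rewrite /lead_exp; apply: anti; [exact: mn' | exact: mn].
Qed.

Lemma val_zero (G H : zmodType) (K : fieldType) (le : H -> H -> Prop)
  (v : K -> option G) (f : H -> K) :
  v 0 = None -> (forall h, f h = 0) -> hahn_val le v f = None.
Proof. by move=> v0 f0; rewrite /hahn_val f0 v0. Qed.

Lemma allzero_or (H : Type) (K : fieldType) (f : H -> K) :
  (forall h, f h = 0) \/ exists h, f h <> 0.
Proof.
case: (classic (exists h, f h <> 0)) => [e|ne]; [by right|left].
move=> h; case: (eqVneq (f h) 0) => // nz; exfalso; apply: ne; exists h; exact/eqP.
Qed.

Lemma min_exists (H : Type) (K : fieldType) (le : H -> H -> Prop) (f : H -> K) :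
  well_ordered_subset le (Defs.support f) -> (exists h, f h <> 0) ->
  exists h0, f h0 <> 0 /\ forall h, f h <> 0 -> le h0 h.
Proof. by move=> wo e; have [m [Pm mm]] := wo (fun h => f h <> 0) e (fun h x => x); exists m. Qed.

Lemma wo_union (H : zmodType) (le : H -> H -> Prop) (S1 S2 : H -> Prop) :
  oH le -> well_ordered_subset le S1 -> well_ordered_subset le S2 ->
  well_ordered_subset le (fun h => S1 h \/ S2 h).
Proof.
move=> [_ _ tr tot _] w1 w2 P [h Ph] PS.
case: (classic (exists h, P h /\ S1 h)) => [e1|n1];
case: (classic (exists h, P h /\ S2 h)) => [e2|n2].
- have [m1 [[P1 _] M1]] := w1 _ e1 (fun h x => x.2).
  have [m2 [[P2 _] M2]] := w2 _ e2 (fun h x => x.2).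
  case: (tot m1 m2) => l.
  + exists m1; split => // x Px; case: (PS x Px) => Sx; first exact: M1.
    exact: (tr _ _ _ l (M2 x (conj Px Sx))).
  + exists m2; split => // x Px; case: (PS x Px) => Sx; last exact: M2.
    exact: (tr _ _ _ l (M1 x (conj Px Sx))).
- have [m1 [[P1 _] M1]] := w1 _ e1 (fun h x => x.2).
  exists m1; split => // x Px; case: (PS x Px) => Sx; first exact: M1.
  by exfalso; apply: n2; exists x.
- have [m2 [[P2 _] M2]] := w2 _ e2 (fun h x => x.2).
  exists m2; split => // x Px; case: (PS x Px) => Sx; last exact: M2.
  by exfalso; apply: n1; exists x.
- by exfalso; case: (PS h Ph) => Sx; [apply: n1|apply: n2]; exists h.
Qed.

Lemma fsum_single (H : zmodType) (K : fieldType) (F : H -> K) h0 :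
  (forall h, h <> h0 -> F h = 0) -> (\sum_(h \in [set: H]) F h) = F h0.
Proof.
move=> HF; rewrite -(fsbig_widen [set h0] setT F) ?fsbig_set1 //.
by move=> h [_ /= nh]; apply: HF.
Qed.

Lemma fsum_nz (H : zmodType) (K : fieldType) (F : H -> K) :
  (\sum_(h \in [set: H]) F h) <> 0 -> exists h, F h <> 0.
Proof.
move=> nz; case: (allzero_or F) => // z; exfalso; apply: nz.
by apply: fsbig1 => h _; apply: z.
Qed.

Lemma ole_omap (G H : zmodType) (leG : rel G) (leH : H -> H -> Prop)
  (a b : option G) h :
  ole (fun x y => leG x y) a b ->
  ole (Gbeta_le leG leH) (omap (fun z => (z, h)) a) (omap (fun z => (z, h)) b).
Proof. by case: a; case: b => //= x y l; right. Qed.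

Lemma ole_refl (G H : zmodType) (leG : rel G) (leH : H -> H -> Prop) a :
  reflexive leG -> ole (Gbeta_le leG leH) a a.
Proof. by move=> r; case: a => //= x; right. Qed.

Theorem proposition2p2 (G : zmodType) (leG : rel G) (A : pred G)
  (H : zmodType) (rho : G -> H) (alpha : H -> G)
  (K : fieldType) (v : K -> option G) (p : nat) (sigma : G -> K) (D : Type) :
  ordered_abelian_group leG ->
  smallest_nonzero_convex_subgroup leG A ->
  quotient_proj A rho ->
  transversal_map rho alpha ->
  char0 K ->
  valued_field_with_value_group leG A v ->
  residue_char leG v p ->
  cross_section A v sigma ->
  infinite_type D ->
  valuation_on (in_hahn (induced_le leG rho) D) (@hahn_zero H K)
    (@hahn_add H K) (hahn_mul (cocycle alpha) sigma)
    (Gbeta_add (cocycle alpha)) (Gbeta_le leG (induced_le leG rho))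
    (hahn_val (induced_le leG rho) v).
Proof.
move=> oG [ncA _] q [tra _] _ [[vN vM vU] _ _] _ [_ cs] _.
have oh := induced_ok oG ncA q.
set le := induced_le leG rho.
have [lrefl lanti ltr ltot ladd] := oh.
have [rB _ rK] := q.
have [[A0 AB] _ _] := ncA.
have [grefl _ _ _ _] := oG.
have v0 : v 0 = None by apply/vN.
have vS : forall x : K, x <> 0 -> exists z, v x = Some z.
  by move=> x nx; case E: (v x) => [z|]; [exists z | exfalso; apply: nx; apply/vN].
split.
-
  move=> f [wo _]; split.
  + move=> e; apply: funext => h; rewrite /hahn_zero.
    case: (allzero_or f) => [->//|ex]; exfalso.
    have [h0 [nz mn]] := min_exists wo ex.
    move: e; rewrite /hahn_val (lead_eq oh nz mn).
    by have [z ->] := vS _ nz.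
  + by move=> ->; apply: val_zero.
-
  move=> f g [wf _] [wg _].
  case: (allzero_or f) => [f0|ef].
    rewrite val_zero //; last first.
      by move=> l; apply: fsbig1 => h _; rewrite f0 !mul0r.
    by rewrite (val_zero _ v0 f0).
  case: (allzero_or g) => [g0|eg].
    rewrite val_zero //; last first.
      by move=> l; apply: fsbig1 => h _; rewrite g0 mulr0 mul0r.
    by rewrite (val_zero _ v0 g0); case: (hahn_val le v f).
  have [h0 [nf mf]] := min_exists wf ef.
  have [k0 [ng mg]] := min_exists wg eg.
  set b := cocycle alpha.
  have term : forall l h, f h * g (l - h) * sigma (- b h (l - h)) <> 0 ->
      le h0 h /\ le k0 (l - h).
    move=> l h nz; split.
    + apply: mf => e; apply: nz; by rewrite e !mul0r.
    + apply: mg => e; apply: nz; by rewrite e mulr0 mul0r.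
  have val0 : hahn_mul b sigma f g (h0 + k0) = f h0 * g k0 * sigma (- b h0 k0).
    rewrite /hahn_mul (fsum_single (h0 := h0)); first by rewrite addrC addKr.
    move=> h nh; case: (eqVneq (f h * g (h0 + k0 - h) * sigma (- b h (h0 + k0 - h))) 0) => // /eqP nz.
    exfalso; apply: nh; have [l1 l2] := term _ _ nz.
    apply: lanti => //.
    have := ladd _ _ (h - k0) l2.
    by rewrite addrC subrK addrA subrK addrK.
  have Ab : A (b h0 k0).
    apply/rK; rewrite /b /cocycle !rB !tra.
    by rewrite addrAC addrK subrr.
  have Anb : A (- b h0 k0) by rewrite -sub0r; apply: AB.
  have nzs : sigma (- b h0 k0) <> 0 by move=> e; move: (cs _ Anb); rewrite e v0.
  have nzp : f h0 * g k0 * sigma (- b h0 k0) <> 0.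
    by apply/eqP; rewrite !mulf_neq0 //; apply/eqP.
  have ge : forall l, hahn_mul b sigma f g l <> 0 -> le (h0 + k0) l.
    move=> l /fsum_nz [h /term [l1 l2]].
    apply: (ltr _ (h + k0)); first exact: ladd.
    have := ladd _ _ h l2; rewrite subrK addrC; exact.
  have nzm : hahn_mul b sigma f g (h0 + k0) <> 0 by rewrite val0.
  rewrite /hahn_val (lead_eq oh nzm ge) val0.
  rewrite (lead_eq oh nf mf) (lead_eq oh ng mg).
  have [zf ef'] := vS _ nf; have [zg eg'] := vS _ ng.
  by rewrite !vM // ef' eg' cs.
- 
  have key : forall f g h0 k0,
      well_ordered_subset le (Defs.support f) ->
      well_ordered_subset le (Defs.support g) ->
      f h0 <> 0 -> (forall h, f h <> 0 -> le h0 h) ->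
      g k0 <> 0 -> (forall h, g h <> 0 -> le k0 h) -> le h0 k0 ->
      ole (Gbeta_le leG le) (hahn_val le v f) (hahn_val le v (hahn_add f g)) \/
      ole (Gbeta_le leG le) (hahn_val le v g) (hahn_val le v (hahn_add f g)).
    move=> f g h0 k0 wf wg nf mf ng mg hk.
    set s := hahn_add f g.
    case: (allzero_or s) => [s0|es].
      by left; rewrite (val_zero _ v0 s0); case: (hahn_val le v f).
    have ws : well_ordered_subset le (Defs.support s).
      move=> P eP PS; apply: (wo_union oh wf wg) eP _ => h Ph.
      have := PS h Ph; rewrite /Defs.support /s /hahn_add => nz.
      case: (eqVneq (f h) 0) => [e|/eqP]; last by left.
      by right => e'; apply: nz; rewrite e e' addr0.
    have [m [ns ms]] := min_exists ws es.
    have hm : le h0 m.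
      case: (eqVneq (f m) 0) => [e|/eqP]; last exact: mf.
      apply: (ltr _ k0 _ hk); apply: mg => e'; apply: ns.
      by rewrite /s /hahn_add e e' addr0.
    rewrite /hahn_val (lead_eq oh ns ms) (lead_eq oh nf mf) (lead_eq oh ng mg).
    case: (eqVneq h0 m) => [ehm|nhm]; last first.
      left; have [z ->] := vS _ nf; case: (v (s m)) => //= z'.
      by left; split => //; apply/eqP.
    rewrite -ehm.
    case: (eqVneq h0 k0) => [ehk|nhk]; last first.
      have gh : g h0 = 0.
        case: (eqVneq (g h0) 0) => // /eqP nz; exfalso.
        by move/eqP: nhk; apply; apply: lanti => //; apply: mg.
      left; rewrite /s /hahn_add gh addr0; exact: ole_refl.
    rewrite -ehk /s /hahn_add.
    by case: (vU (f h0) (g h0) I I) => l; [left|right]; apply: ole_omap.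
  move=> f g [wf _] [wg _].
  case: (allzero_or f) => [f0|ef].
    right; have -> : hahn_add f g = g by apply: funext => h; rewrite /hahn_add f0 add0r.
    exact: ole_refl.
  case: (allzero_or g) => [g0|eg].
    left; have -> : hahn_add f g = f by apply: funext => h; rewrite /hahn_add g0 addr0.
    exact: ole_refl.
  have [h0 [nf mf]] := min_exists wf ef.
  have [k0 [ng mg]] := min_exists wg eg.
  case: (ltot h0 k0) => l; first exact: (key f g h0 k0).
  have -> : hahn_add f g = hahn_add g f by apply: funext => h; rewrite /hahn_add addrC.
  by case: (key g f k0 h0) => //; [right|left].
Qed.
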